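(* Let $S=\{(n,k)\in\mathbb Z_{>0}^2:\gcd(n,k)=1,\ n\ge3,\ n-k\text{ odd},\ k\not\equiv2\ (\mathrm{mod}\ 4)\}$ and $T=\{(m,q)\in\mathbb Z^2:1<q<m,\ \gcd(m,q)=1\}$. Define $\theta:S\to T$ by $\theta(n,k)=(n+\tfrac k2,\,n)$ if $n$ is odd and $\theta(n,k)=(\tfrac n2+k,\,\tfrac n2)$ if $n$ is even. Then $\theta$ is a well-defined bijection (with inverse $(m,q)\mapsto(q,2(m-q))$ if $m-q$ is even and $(m,q)\mapsto(2q,m-q)$ if $m-q$ is odd), and for every $(n,k)\in S$ there is an isomorphism $\Bbbk_{-1}[u,v]^{G_{n,k}}\cong\Bbbk[u,v]^{\mathbb D_{\theta(n,k)}}$.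
   Context: $\Bbbk$ is algebraically closed of characteristic $0$; $\Bbbk_{-1}[u,v]=\Bbbk\langle u,v\rangle/(vu+uv)$ and $\Bbbk[u,v]$ is the commutative polynomial ring; matrices $\begin{pmatrix}a&b\\c&d\end{pmatrix}$ act by $u\mapsto au+cv$, $v\mapsto bu+dv$. $G_{n,k}$ is generated by $\mathrm{diag}(\omega^{2k},\omega^{-2k})$ and $\begin{pmatrix}0&\omega^n\\\omega^n&0\end{pmatrix}$ for $\omega$ a primitive $(2nk)$th root of unity. For $(m,q)\in T$ and $\eta$ a primitive $4q(m-q)$th root of unity, $\mathbb D_{m,q}\le\mathrm{GL}(2,\Bbbk)$ is generated by $\mathrm{diag}(\eta^{2(m-q)},\eta^{-2(m-q)})$ and $\begin{pmatrix}0&\eta^q\\\eta^q&0\end{pmatrix}$. *)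

(* Defs.v *)
From HB Require Import structures.
From mathcomp Require Import all_boot all_order all_algebra.
Set Implicit Arguments. Unset Strict Implicit. Unset Printing Implicit Defensive.
Import Order.TTheory GRing.Theory Num.Theory.
Local Open Scope ring_scope.

(* Two-variable polynomials are represented as {poly {poly K}}:
   p`_i`_j is the coefficient of the monomial u^i v^j.
   U = 'X (variable u), V = 'X%:P (variable v). *)
Section TwoVar.
Variable K : fieldType.

Definition bipoly := {poly {poly K}}.
Definition U : bipoly := 'X.
Definition V : bipoly := ('X)%:P.
Definition cst (c : K) : bipoly := (c%:P)%:P.
Definition mono (a b : nat) : bipoly := 'X^a * ('X^b)%:P.

(* Multiplication of k_{-1}[u,v] = k<u,v>/(vu+uv) in the basis u^a v^b:
   (u^a v^b)(u^c v^d) = (-1)^(b c) u^(a+c) v^(b+d). *)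
Definition skmul (p q : bipoly) : bipoly :=
  \sum_(a < size p) \sum_(b < size p`_a) \sum_(c < size q) \sum_(d < size q`_c)
     cst (p`_a`_b * q`_c`_d * (-1) ^+ (b * c)) * mono (a + c) (b + d).

Definition subst_with (mul : bipoly -> bipoly -> bipoly) (p x y : bipoly) : bipoly :=
  \sum_(i < size p) \sum_(j < size p`_i)
     mul (cst p`_i`_j) (mul (iter i (mul x) 1) (iter j (mul y) 1)).

Definition img_u (g : 'M[K]_2) : bipoly := cst (g 0 0) * U + cst (g 1 0) * V.
Definition img_v (g : 'M[K]_2) : bipoly := cst (g 0 1) * U + cst (g 1 1) * V.

Definition comm_act (g : 'M[K]_2) (p : bipoly) : bipoly :=
  subst_with *%R p (img_u g) (img_v g).
Definition skew_act (g : 'M[K]_2) (p : bipoly) : bipoly :=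
  subst_with skmul p (img_u g) (img_v g).

Definition mat2 (a b c d : K) : 'M[K]_2 :=
  \matrix_(i < 2, j < 2)
    if (i : nat) == 0%N then (if (j : nat) == 0%N then a else b)
    else (if (j : nat) == 0%N then c else d).

Inductive gen_grp (A B : 'M[K]_2) : 'M[K]_2 -> Prop :=
| gen_one : gen_grp A B 1%:M
| gen_A : gen_grp A B A
| gen_B : gen_grp A B B
| gen_mul x y : gen_grp A B x -> gen_grp A B y -> gen_grp A B (x *m y)
| gen_inv x : gen_grp A B x -> gen_grp A B (invmx x).

(* G_{n,k} for w a primitive (2nk)-th root of unity *)
Definition G_nk (n k : nat) (w : K) (g : 'M[K]_2) : Prop :=
  gen_grp (mat2 (w ^+ (2 * k)) 0 0 (w ^- (2 * k)))
          (mat2 0 (w ^+ n) (w ^+ n) 0) g.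

(* D_{m,q} for e a primitive (4q(m-q))-th root of unity *)
Definition D_mq (m q : nat) (e : K) (g : 'M[K]_2) : Prop :=
  gen_grp (mat2 (e ^+ (2 * (m - q))) 0 0 (e ^- (2 * (m - q))))
          (mat2 0 (e ^+ q) (e ^+ q) 0) g.

Definition skew_inv (G : 'M[K]_2 -> Prop) (p : bipoly) : Prop :=
  forall g, G g -> skew_act g p = p.
Definition comm_inv (G : 'M[K]_2 -> Prop) (p : bipoly) : Prop :=
  forall g, G g -> comm_act g p = p.

Definition skew_comm_alg_iso (A B : bipoly -> Prop) : Prop :=
  exists f : bipoly -> bipoly,
    [/\ forall p, A p -> B (f p),
        forall p q, A p -> A q -> f p = f q -> p = q,
        forall r, B r -> (exists2 p, A p & f p = r) &
       [/\ forall p q, A p -> A q -> f (p + q) = f p + f q,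
        forall p q, A p -> A q -> f (skmul p q) = f p * f q,
        f 1 = 1 &
        forall c p, A p -> f (cst c * p) = cst c * f p]].
End TwoVar.

Definition inS (x : nat * nat) : bool :=
  let: (n, k) := x in
  [&& 0 < k, coprime n k, 3 <= n, odd (n + k) & k %% 4 != 2]%N.

Definition inT (y : nat * nat) : bool :=
  let: (m, q) := y in [&& 1 < q, q < m & coprime m q]%N.

Definition theta (x : nat * nat) : nat * nat :=
  let: (n, k) := x in
  if odd n then (n + k %/ 2, n)%N else (n %/ 2 + k, n %/ 2)%N.

Definition theta_inv (y : nat * nat) : nat * nat :=
  let: (m, q) := y in
  if ~~ odd (m - q) then (q, 2 * (m - q))%N else (2 * q, m - q)%N.

(* Main.v *)
Require Import Defs.
From HB Require Import structures.
From mathcomp Require Import all_boot all_order all_algebra.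
From mathcomp Require Import zify ring.
Set Implicit Arguments. Unset Strict Implicit. Unset Printing Implicit Defensive.
Import GRing.Theory.
Local Open Scope ring_scope.


Section Gen.
Variable K : fieldType.
Local Notation bp := (bipoly K).
Local Notation mono := (mono K).

Lemma coef_cm (x : K) a b i j :
  (cst x * mono a b : bp)`_i`_j = if (i == a) && (j == b) then x else 0.
Proof.
rewrite /cst /mono mulrCA -polyCM coefXnM.
case: ltnP => [lt|ge].
  rewrite coef0; case: eqP => // E; by rewrite E ltnn in lt.
rewrite coefC; case: (eqVneq i a) => [->|ne] /=.
  by rewrite subnn eqxx coefCM coefXn; case: eqP; rewrite ?mulr1 ?mulr0.
have -> : (i - a == 0)%N = false by apply/negbTE; rewrite subn_eq0 -ltnNge ltn_neqAle eq_sym ne.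
by rewrite coef0.
Qed.

Lemma sum_ord_eq (T : zmodType) n a (G : nat -> T) :
  \sum_(i < n) (if a == (i : nat) then G i else 0) = if (a < n)%N then G a else 0.
Proof.
case: ltnP => [lt|ge].
  rewrite (bigD1 (Ordinal lt)) //= eqxx big1 ?addr0 // => i ne.
  case: eqP => // E; case/eqP: ne; apply: val_inj => /=; by rewrite E.
rewrite big1 // => i _; case: eqP => // E.
have := ltn_ord i; by rewrite -E ltnNge ge.
Qed.

Lemma coefNF (p : bp) (F : nat -> nat -> K) a b :
  (\sum_(i < size p) \sum_(j < size p`_i) cst (F i j) * mono i j)`_a`_b
  = if (a < size p)%N && (b < size (p`_a)%R)%N then F a b else 0.
Proof.
rewrite !coef_sum.
under eq_bigr => i _ do rewrite !coef_sum.
under eq_bigr => i _ do under eq_bigr => j _ do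
  rewrite coef_cm.
rewrite (eq_bigr (fun i : 'I_(size p) => if a == (i : nat) then
   (if (b < size (p`_i)%R)%N then F i b else 0) else 0)).
  by rewrite (sum_ord_eq _ _ (fun i => if (b < size (p`_i)%R)%N then F i b else 0)); case: ltnP.
move=> i _; case: eqP => [E|_].
  rewrite -(sum_ord_eq _ _ (fun j => F i j)); apply: eq_bigr => j _; by rewrite andTb.
by rewrite big1.
Qed.

Lemma coefNFs (p : bp) (F : nat -> nat -> K) a b :
  (\sum_(i < size p) \sum_(j < size p`_i) cst (F i j) * mono j i)`_a`_b
  = if (b < size p)%N && (a < size (p`_b)%R)%N then F b a else 0.
Proof.
rewrite !coef_sum.
under eq_bigr => i _ do rewrite !coef_sum.
under eq_bigr => i _ do under eq_bigr => j _ do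
  rewrite coef_cm andbC.
rewrite (eq_bigr (fun i : 'I_(size p) => if b == (i : nat) then
   (if (a < size (p`_i)%R)%N then F i a else 0) else 0)).
  by rewrite (sum_ord_eq _ _ (fun i => if (a < size (p`_i)%R)%N then F i a else 0)); case: ltnP.
move=> i _; case: eqP => [E|_].
  rewrite -(sum_ord_eq _ _ (fun j => F i j)); apply: eq_bigr => j _; by rewrite andTb.
by rewrite big1.
Qed.

Lemma coef_out (p : bp) a b : ~~ ((a < size p)%N && (b < size (p`_a)%R)%N) -> p`_a`_b = 0.
Proof.
case/nandP; rewrite -leqNgt => H; last by rewrite nth_default.
by rewrite (nth_default 0 H) coef0.
Qed.

Lemma NF (p : bp) : p = \sum_(i < size p) \sum_(j < size p`_i) cst (p`_i`_j) * mono i j.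
Proof.
apply/polyP => a; apply/polyP => b; rewrite (coefNF p (fun i j => p`_i`_j)).
by case: ifP => // /negbT /coef_out.
Qed.


Lemma cst0 : cst 0 = 0 :> bp. Proof. by rewrite /cst !polyC0. Qed.
Lemma cst1 : cst 1 = 1 :> bp. Proof. by rewrite /cst !polyC1. Qed.
Lemma mono00 : mono 0 0 = 1. Proof. by rewrite /mono !expr0 polyC1 mulr1. Qed.
Lemma one_m : 1 = cst 1 * mono 0 0 :> bp. Proof. by rewrite cst1 mono00 mulr1. Qed.

Lemma sum2_eq (T : zmodType) (p : bp) a b (Y : T) : (p`_a`_b = 0 -> Y = 0) ->
  \sum_(i < size p) \sum_(j < size p`_i) (if (a == i) && (b == j) then Y else 0) = Y.
Proof.
move=> HY.
rewrite (eq_bigr (fun i : 'I_(size p) => if a == (i : nat) then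
   (if (b < size (p`_i)%R)%N then Y else 0) else 0)).
  rewrite (sum_ord_eq _ _ (fun i => if (b < size (p`_i)%R)%N then Y else 0)).
  case: ltnP => H1; last by rewrite HY // coef_out // ltnNge H1.
  case: ltnP => H2 //; by rewrite HY // coef_out // H1 ltnNge H2.
move=> i _; case: eqP => [E|_]; last by rewrite big1.
by rewrite -(sum_ord_eq _ _ (fun j => Y)); apply: eq_bigr => j _; rewrite andTb.
Qed.

Lemma sum_mono (T : zmodType) x a b (H : nat -> nat -> K -> T) :
  (forall i j, H i j 0 = 0) ->
  \sum_(i < size (cst x * mono a b)) \sum_(j < size (cst x * mono a b)`_i)
     H i j ((cst x * mono a b)`_i`_j) = H a b x.
Proof.
move=> H0; rewrite -(sum2_eq (p := cst x * mono a b) (a:=a) (b:=b) (Y := H a b x)).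
  have E (i j : nat) : H i j (if (i == a) && (j == b) then x else 0)
     = if (a == i) && (b == j) then H a b x else 0.
    rewrite [a == i]eq_sym [b == j]eq_sym.
    by case: eqP => [->|_]; case: eqP => [->|_]; rewrite /= ?H0.
  by apply: eq_bigr => i _; apply: eq_bigr => j _; rewrite coef_cm E.
by rewrite coef_cm !eqxx /= => ->.
Qed.

Lemma skmul_mono x y a b c d :
  skmul (cst x * mono a b) (cst y * mono c d) =
  cst (x * y * (-1) ^+ (b * c)) * mono (a + c) (b + d).
Proof.
rewrite /skmul.
rewrite (@sum_mono _ _ _ _ (fun i j v => \sum_(c0 < size (cst y * mono c d))
     \sum_(d0 < size (cst y * mono c d)`_c0)
     cst (v * (cst y * mono c d)`_c0`_d0 * (-1) ^+ (j * c0)) * mono (i + c0) (j + d0))).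
  rewrite (@sum_mono _ _ _ _ (fun i j v => cst (x * v * (-1) ^+ (b * i)) * mono (a + i) (b + j))) //.
  by move=> i j; rewrite mulr0 !mul0r /cst ?polyC0 ?mul0r.
move=> i j; apply: big1 => c0 _; apply: big1 => d0 _.
by rewrite !mul0r /cst ?polyC0 ?mul0r.
Qed.

Lemma cst_mulr x y : cst (x * y) = cst x * cst y :> bp.
Proof. by rewrite /cst !polyCM. Qed.

Lemma mul_mono x y a b c d :
  (cst x * mono a b) * (cst y * mono c d) =
  cst (x * y * 1 ^+ (b * c)) * mono (a + c) (b + d).
Proof.
rewrite expr1n mulr1 cst_mulr /mono !exprD polyCM.
ring.
Qed.

Section Act.
Variable mul : bp -> bp -> bp.
Variable s : K.
Hypothesis Hmul : forall x y a b c d,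
  mul (cst x * mono a b) (cst y * mono c d) = cst (x * y * s ^+ (b * c)) * mono (a + c) (b + d).

Lemma iter_u x i : iter i (mul (cst x * mono 1 0)) 1 = cst (x ^+ i) * mono i 0.
Proof.
elim: i => [|i IH]; first by rewrite /= expr0 -one_m.
by rewrite iterS IH Hmul mul0n expr0 mulr1 -exprS.
Qed.

Lemma iter_v x i : iter i (mul (cst x * mono 0 1)) 1 = cst (x ^+ i) * mono 0 i.
Proof.
elim: i => [|i IH]; first by rewrite /= expr0 -one_m.
by rewrite iterS IH Hmul muln0 expr0 mulr1 -exprS.
Qed.

Lemma subst_diag (p : bp) al de :
  subst_with mul p (cst al * mono 1 0) (cst de * mono 0 1) =
  \sum_(i < size p) \sum_(j < size p`_i) cst (p`_i`_j * (al ^+ i * de ^+ j)) * mono i j.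
Proof.
apply: eq_bigr => i _; apply: eq_bigr => j _.
rewrite iter_u iter_v Hmul muln0 expr0 mulr1 addn0 add0n.
by rewrite -(mulr1 (cst p`_i`_j)) -mono00 Hmul mul0n expr0 mulr1 !add0n.
Qed.

Lemma subst_anti (p : bp) be ga :
  subst_with mul p (cst ga * mono 0 1) (cst be * mono 1 0) =
  \sum_(i < size p) \sum_(j < size p`_i) cst (p`_i`_j * (ga ^+ i * be ^+ j * s ^+ (i * j))) * mono j i.
Proof.
apply: eq_bigr => i _; apply: eq_bigr => j _.
rewrite iter_u iter_v Hmul.
by rewrite -(mulr1 (cst p`_i`_j)) -mono00 Hmul mul0n expr0 mulr1 !add0n addn0.
Qed.


Lemma mat2_mul (a b c d a' b' c' d' : K) :
  mat2 a b c d *m mat2 a' b' c' d' =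
  mat2 (a * a' + b * c') (a * b' + b * d') (c * a' + d * c') (c * b' + d * d').
Proof.
apply/matrixP => i j; rewrite !mxE !big_ord_recr big_ord0 /= add0r !mxE /=.
by case: i => [[|[|i]] Hi]; case: j => [[|[|j]] Hj].
Qed.

Lemma mat2_1 : 1%:M = mat2 1 0 0 1 :> 'M[K]_2.
Proof.
apply/matrixP => i j; rewrite !mxE.
by case: i => [[|[|i]] Hi]; case: j => [[|[|j]] Hj].
Qed.

Lemma invmx_eq (A B : 'M[K]_2) : A *m B = 1%:M -> invmx A = B.
Proof.
move=> AB; have [uA _] := mulmx1_unit AB.
by rewrite -[invmx A]mulmx1 -AB mulmxA mulVmx // mul1mx.
Qed.

Lemma mat2E00 (a b c d : K) : mat2 a b c d 0 0 = a. Proof. by rewrite mxE. Qed.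
Lemma mat2E01 (a b c d : K) : mat2 a b c d 0 1 = b. Proof. by rewrite mxE. Qed.
Lemma mat2E10 (a b c d : K) : mat2 a b c d 1 0 = c. Proof. by rewrite mxE. Qed.
Lemma mat2E11 (a b c d : K) : mat2 a b c d 1 1 = d. Proof. by rewrite mxE. Qed.

Lemma U_mono : U K = mono 1 0. Proof. by rewrite /U /mono expr1 expr0 polyC1 mulr1. Qed.
Lemma V_mono : V K = mono 0 1. Proof. by rewrite /V /mono expr1 expr0 mul1r. Qed.

Lemma img_u_diag (al de : K) : img_u (mat2 al 0 0 de) = cst al * mono 1 0.
Proof. by rewrite /img_u mat2E00 mat2E10 cst0 mul0r addr0 U_mono. Qed.
Lemma img_v_diag (al de : K) : img_v (mat2 al 0 0 de) = cst de * mono 0 1.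
Proof. by rewrite /img_v mat2E01 mat2E11 cst0 mul0r add0r V_mono. Qed.
Lemma img_u_anti (be ga : K) : img_u (mat2 0 be ga 0) = cst ga * mono 0 1.
Proof. by rewrite /img_u mat2E00 mat2E10 cst0 mul0r add0r V_mono. Qed.
Lemma img_v_anti (be ga : K) : img_v (mat2 0 be ga 0) = cst be * mono 1 0.
Proof. by rewrite /img_v mat2E01 mat2E11 cst0 mul0r addr0 U_mono. Qed.

Definition act (g : 'M[K]_2) (p : bp) := subst_with mul p (img_u g) (img_v g).

Lemma act_diag_coef al de p a b :
  (act (mat2 al 0 0 de) p)`_a`_b = p`_a`_b * (al ^+ a * de ^+ b).
Proof.
rewrite /act img_u_diag img_v_diag subst_diag //.
rewrite (coefNF p (fun i j => p`_i`_j * (al ^+ i * de ^+ j))).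
by case: ifP => // /negbT /coef_out ->; rewrite mul0r.
Qed.

Lemma act_anti_coef be ga p a b :
  (act (mat2 0 be ga 0) p)`_a`_b = p`_b`_a * (ga ^+ b * be ^+ a * s ^+ (b * a)).
Proof.
rewrite /act img_u_anti img_v_anti subst_anti //.
rewrite (coefNFs p (fun i j => p`_i`_j * (ga ^+ i * be ^+ j * s ^+ (i * j)))).
by case: ifP => // /negbT /coef_out ->; rewrite mul0r.
Qed.

Hypothesis s2 : s * s = 1.
Variables al0 be0 : K.
Hypothesis al0nz : al0 != 0.
Hypothesis be0nz : be0 != 0.

Definition condG (p : bp) :=
  (forall a b, p`_a`_b * (al0 ^+ a * al0^-1 ^+ b) = p`_a`_b) /\
  (forall a b, p`_b`_a * (be0 ^+ b * be0 ^+ a * s ^+ (b * a)) = p`_a`_b).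

Definition valid i j := al0 ^+ i * al0^-1 ^+ j = 1 /\ (be0 ^+ i * be0 ^+ j) ^+ 2 = 1.

Lemma valid_sym i j : valid i j -> valid j i.
Proof.
case=> H1 H2; split; last by rewrite mulrC.
move: H1; rewrite !exprVn => H1.
have nzi : al0 ^+ i != 0 by rewrite expf_neq0.
have nzj : al0 ^+ j != 0 by rewrite expf_neq0.
have E : al0 ^+ i = al0 ^+ j by rewrite -[al0 ^+ i](mulfVK nzj) H1 mul1r.
by rewrite E mulfV.
Qed.

Lemma cond_valid p i j : condG p -> p`_i`_j != 0 -> valid i j.
Proof.
case=> C1 C2 nz; split.
  by apply: (mulfI nz); rewrite mulr1 C1.
have E := C2 i j; have F := C2 j i.
rewrite -E -mulrA in F.
have : p`_j`_i != 0 by apply: contraNneq nz => Z; rewrite -E Z mul0r.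
move=> nz2; have G := mulfI nz2 (etrans F (esym (mulr1 _))).
rewrite -G; rewrite [X in _ = X * _]mulrC (mulnC j i).
set X := be0 ^+ i * be0 ^+ j; set Y := s ^+ (i * j).
have -> : be0 ^+ j * be0 ^+ i = X by rewrite mulrC.
have YY : Y * Y = 1 by rewrite /Y -exprMn s2 expr1n.
by rewrite [Y * X]mulrC [RHS]mulrACA YY mulr1 expr2.
Qed.

Definition Mset (g : 'M[K]_2) :=
  (exists al de, [/\ g = mat2 al 0 0 de, al != 0, de != 0 &
      forall i j, valid i j -> al ^+ i * de ^+ j = 1]) \/
  (exists be ga, [/\ g = mat2 0 be ga 0, be != 0, ga != 0 &
      forall i j, valid i j -> ga ^+ i * be ^+ j = be0 ^+ i * be0 ^+ j]).

Lemma Mset_gen g : gen_grp (mat2 al0 0 0 al0^-1) (mat2 0 be0 be0 0) g -> Mset g.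
Proof.
elim=> {g}.
- left; exists 1, 1; split; rewrite ?oner_neq0 ?mat2_1 // => i j _.
  by rewrite !expr1n mulr1.
- left; exists al0, al0^-1; split; rewrite ?invr_neq0 //. by move=> i j [].
- right; exists be0, be0; split=> //.
- move=> x y _ [[a [d [-> an dn Ha]]]|[b [g [-> bn gn Hb]]]]
          _ [[a' [d' [-> an' dn' Ha']]]|[b' [g' [-> bn' gn' Hb']]]];
    rewrite mat2_mul !mul0r !mulr0 ?add0r ?addr0.
  + left; exists (a * a'), (d * d'); split; rewrite ?mulf_neq0 // => i j v.
    by rewrite !exprMn mulrACA Ha // Ha' // mulr1.
  + right; exists (a * b'), (d * g'); split; rewrite ?mulf_neq0 // => i j v.
    by rewrite !exprMn mulrACA [d ^+ i * _]mulrC Ha ?mul1r ?Hb' //; apply: valid_sym.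
  + right; exists (b * d'), (g * a'); split; rewrite ?mulf_neq0 // => i j v.
    by rewrite !exprMn mulrACA Ha' ?mulr1 ?Hb.
  + left; exists (b * g'), (g * b'); split; rewrite ?mulf_neq0 // => i j v.
    rewrite !exprMn mulrACA Hb' // [b ^+ i * _]mulrC Hb; last by apply: valid_sym.
    by case: v => _; rewrite expr2 [be0 ^+ j * _]mulrC.
- move=> x _ [[a [d [-> an dn Ha]]]|[b [g [-> bn gn Hb]]]].
  + left; exists a^-1, d^-1; split; rewrite ?invr_neq0 //; last move=> i j v.
      apply: invmx_eq; rewrite mat2_mul !mul0r !mulr0 add0r addr0 !mulfV //.
      by rewrite ?add0r ?addr0 mat2_1.
    by rewrite !exprVn -invfM Ha // invr1.
  + right; exists g^-1, b^-1; split; rewrite ?invr_neq0 //; last move=> i j v.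
      apply: invmx_eq; rewrite mat2_mul !mul0r !mulr0 add0r addr0 !mulfV //.
      by rewrite ?add0r ?addr0 mat2_1.
    rewrite !exprVn -invfM [b ^+ i * _]mulrC Hb; last by apply: valid_sym.
    case: v => _; rewrite [be0 ^+ j * _]mulrC; set X := be0 ^+ i * be0 ^+ j => X2.
    have Xn : X != 0 by apply: contra_eq_neq X2 => ->; rewrite expr2 mul0r eq_sym oner_neq0.
    by apply: (mulfI Xn); rewrite mulfV // -expr2 X2.
Qed.

Lemma Mset_act g p : Mset g -> condG p -> act g p = p.
Proof.
move=> [[a [d [-> an dn Ha]]]|[b [g' [-> bn gn Hb]]]] C;
  apply/polyP => i; apply/polyP => j.
  rewrite act_diag_coef; have [Z|nz] := eqVneq p`_i`_j 0; first by rewrite Z mul0r.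
  by rewrite Ha ?mulr1 //; exact: (cond_valid C nz).
rewrite act_anti_coef; have [Z|nz] := eqVneq p`_j`_i 0.
  by rewrite Z mul0r -(proj2 C i j) Z mul0r.
by rewrite Hb; [apply: (proj2 C) | exact: (cond_valid C nz)].
Qed.

Lemma inv_iff p :
  (forall g, gen_grp (mat2 al0 0 0 al0^-1) (mat2 0 be0 be0 0) g -> act g p = p) <-> condG p.
Proof.
split=> [H|C g Hg]; last by apply: Mset_act => //; apply: Mset_gen.
split=> a b.
  by rewrite -act_diag_coef H //; constructor.
by rewrite -act_anti_coef H //; constructor.
Qed.

End Act.
End Gen.

Section Iso.
Variable K : fieldType.
Local Notation bp := (bipoly K).
Local Notation mono := (mono K).

Variable j : K.
Hypothesis hj : j ^+ 2 = -1.
Variables al0 be0 al1 be1 : K.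
Hypothesis al0nz : al0 != 0.
Hypothesis be0nz : be0 != 0.
Hypothesis al1nz : al1 != 0.
Hypothesis be1nz : be1 != 0.
Hypothesis HSC : forall a b, valid al0 be0 a b -> valid al1 be1 a b.
Hypothesis HCS : forall a b, valid al1 be1 a b -> valid al0 be0 a b.
Hypothesis Hpar : forall a b, valid al0 be0 a b -> odd a = odd b.
Hypothesis Hkey : forall a b, valid al0 be0 a b -> (j * be1) ^+ (a + b) = be0 ^+ (a + b).

Definition cc a b := j ^+ (a * a) * j ^+ b.

Lemma jnz : j != 0.
Proof. apply: contraTneq isT => E; move: hj; rewrite E expr2 mul0r => /eqP; by rewrite eq_sym oppr_eq0 oner_eq0. Qed.

Lemma ccnz a b : cc a b != 0.
Proof. by rewrite /cc mulf_neq0 // expf_neq0 // jnz. Qed.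

Lemma j4 : j ^+ 4 = 1.
Proof. by rewrite (_ : 4 = 2 * 2)%N // exprM hj sqrrN expr1n. Qed.

Lemma sq_mod4 a : ((a * a) %% 4 = odd a)%N.
Proof.
rewrite -{1 2}(odd_double_half a); set r := odd a; set h := a./2.
have -> : ((r + h.*2) * (r + h.*2) = (h * r + h * h) * 4 + r * r)%N.
  rewrite -!muln2; lia.
by rewrite modnMDl; case: r.
Qed.

Lemma jsq a b : odd a = odd b -> j ^+ (a * a) = j ^+ (b * b).
Proof. by move=> E; rewrite -(expr_mod _ j4) -[in RHS](expr_mod _ j4) !sq_mod4 E. Qed.

Lemma sign_par a b c : odd a = odd b -> (-1) ^+ (a * c) = (-1) ^+ (b * c) :> K.
Proof. by move=> E; rewrite -signr_odd -[in RHS]signr_odd !oddM E. Qed.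

Lemma key a b : valid al0 be0 a b ->
  cc b a * (be1 ^+ b * be1 ^+ a) = cc a b * (be0 ^+ b * be0 ^+ a * (-1) ^+ (b * a)).
Proof.
move=> v; have P := Hpar v; have Kk := Hkey v.
rewrite -!exprD addnC -Kk exprMn /cc.
rewrite (jsq P) exprD.
have -> : (-1) ^+ (b * a) = (-1) ^+ b :> K.
  rewrite -signr_odd -[in RHS]signr_odd oddM P; by case: (odd b).
have -> : (-1) ^+ b = j ^+ b * j ^+ b.
  by rewrite -exprD addnn -mul2n exprM hj.
rewrite exprD; set B := j ^+ b.
have B4 : B * B * B * B = 1.
  by rewrite /B -!exprD (_ : (b + b + b + b = 4 * b)%N) ?exprM ?j4 ?expr1n //; lia.
by rewrite -[LHS]mulr1 -B4; ring.
Qed.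

Definition isof (p : bp) : bp :=
  \sum_(i < size p) \sum_(j0 < size p`_i) cst (cc i j0 * p`_i`_j0) * mono i j0.
Definition isoi (p : bp) : bp :=
  \sum_(i < size p) \sum_(j0 < size p`_i) cst ((cc i j0)^-1 * p`_i`_j0) * mono i j0.

Lemma isof_coef p a b : (isof p)`_a`_b = cc a b * p`_a`_b.
Proof.
rewrite /isof (coefNF p (fun i j0 => cc i j0 * p`_i`_j0)).
by case: ifP => // /negbT /coef_out ->; rewrite mulr0.
Qed.

Lemma isoi_coef p a b : (isoi p)`_a`_b = (cc a b)^-1 * p`_a`_b.
Proof.
rewrite /isoi (coefNF p (fun i j0 => (cc i j0)^-1 * p`_i`_j0)).
by case: ifP => // /negbT /coef_out ->; rewrite mulr0.
Qed.

Lemma isof_sum (I : Type) (r : seq I) (F : I -> bp) :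
  isof (\sum_(i <- r) F i) = \sum_(i <- r) isof (F i).
Proof.
apply/polyP => a; apply/polyP => b.
rewrite isof_coef !coef_sum mulr_sumr; apply: eq_bigr => i _.
by rewrite isof_coef.
Qed.

Lemma isof_cm x a b : isof (cst x * mono a b) = cst (cc a b * x) * mono a b.
Proof.
apply/polyP => a'; apply/polyP => b'.
rewrite isof_coef !coef_cm; case: eqP => [->|]; case: eqP => [->|] //=; by rewrite mulr0.
Qed.

Lemma coef_cstM c (p : bp) a b : (cst c * p)`_a`_b = c * p`_a`_b.
Proof. by rewrite /cst coefCM coefCM. Qed.

Lemma coef1 a b : (1 : bp)`_a`_b = if (a == 0%N) && (b == 0%N) then 1 else 0.
Proof. by rewrite one_m coef_cm. Qed.

Local Notation condS := (condG (-1) al0 be0).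
Local Notation condC := (condG 1 al1 be1).

Lemma sNN : (-1) * (-1) = 1 :> K. Proof. by rewrite mulrNN mulr1. Qed.
Lemma s11 : 1 * 1 = 1 :> K. Proof. by rewrite mulr1. Qed.

Lemma isof_mul p q : condS p -> condS q -> isof (skmul p q) = isof p * isof q.
Proof.
move=> Cp Cq.
rewrite /skmul isof_sum {2 3}/isof mulr_suml; apply: eq_bigr => a _.
rewrite isof_sum mulr_suml; apply: eq_bigr => b _.
rewrite isof_sum mulr_sumr; apply: eq_bigr => c _.
rewrite isof_sum mulr_sumr; apply: eq_bigr => d _.
rewrite isof_cm mul_mono expr1n mulr1; congr (cst _ * _).
have [Z|nz1] := eqVneq p`_a`_b 0; first by rewrite Z !(mulr0, mul0r).
have [Z|nz2] := eqVneq q`_c`_d 0; first by rewrite Z !(mulr0, mul0r).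
have P1 := Hpar (cond_valid sNN Cp nz1).
have P2 := Hpar (cond_valid sNN Cq nz2).
rewrite /cc.
have -> : ((a + c) * (a + c) = a * a + c * c + (a * c).*2)%N.
  rewrite -muln2; lia.
rewrite !exprD.
have -> : j ^+ (a * c).*2 = (-1) ^+ (a * c).
  by rewrite -muln2 mulnC exprM hj.
have -> : (-1) ^+ (a * c) = (-1) ^+ (b * c) :> K by apply: sign_par.
set J1 := j ^+ (a * a); set J2 := j ^+ (c * c); set J3 := j ^+ b; set J4 := j ^+ d.
set S := (-1) ^+ (b * c); set P := p`_a`_b; set Q := q`_c`_d.
have SS : S * S = 1 by rewrite /S -exprD addnn -mul2n exprM sqrrN !expr1n.
rewrite -[RHS]mulr1 -SS.
ring.
Qed.


Lemma iso_main : skew_comm_alg_iso (fun p => condS p) (fun p => condC p).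
Proof.
exists isof; split.
- move=> p Cp; split=> a b; rewrite !isof_coef.
    have [Z|nz] := eqVneq p`_a`_b 0; first by rewrite Z !(mulr0, mul0r).
    by have [-> _] := HSC (cond_valid sNN Cp nz); rewrite mulr1.
  rewrite -(proj2 Cp a b) expr1n mulr1.
  have [Z|nz] := eqVneq p`_b`_a 0; first by rewrite Z !(mulr0, mul0r).
  have v := valid_sym al0nz (cond_valid sNN Cp nz).
  by rewrite mulrAC (key v); ring.
- move=> p q _ _ E; apply/polyP => a; apply/polyP => b.
  by apply: (mulfI (ccnz a b)); rewrite -!isof_coef E.
- move=> r Cr; exists (isoi r).
    split=> a b; rewrite !isoi_coef.
      have [Z|nz] := eqVneq r`_a`_b 0; first by rewrite Z !(mulr0, mul0r).
      by have [-> _] := HCS (cond_valid s11 Cr nz); rewrite mulr1.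
    rewrite -(proj2 Cr a b) expr1n mulr1.
    have [Z|nz] := eqVneq r`_b`_a 0; first by rewrite Z !(mulr0, mul0r).
    have v := valid_sym al0nz (HCS (cond_valid s11 Cr nz)).
    have := key v; set X := be1 ^+ b * be1 ^+ a; set Y := be0 ^+ b * _ * _ => kk.
    have HY : Y = (cc a b)^-1 * (cc b a * X) by rewrite kk mulKf // ccnz.
    rewrite HY; have := ccnz a b; have := ccnz b a; move: (cc a b) (cc b a) => u t tn un.
    by rewrite [u^-1 * _]mulrCA -mulrA [r`_b`_a * _]mulrCA mulKf // mulrCA.
  by apply/polyP => a; apply/polyP => b; rewrite isof_coef isoi_coef mulVKf // ccnz.
split.
- move=> p q _ _; apply/polyP => a; apply/polyP => b.
  by rewrite !(isof_coef, coefD) mulrDr.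
- by move=> p q Cp Cq; apply: isof_mul.
- apply/polyP => a; apply/polyP => b; rewrite isof_coef coef1.
  by case: eqP => [->|]; case: eqP => [->|] /=; rewrite ?mulr0 // /cc !expr0 !mulr1.
- move=> c p _; apply/polyP => a; apply/polyP => b.
  by rewrite !(isof_coef, coef_cstM) mulrCA.
Qed.

End Iso.


Lemma prim_nz (R : idomainType) N (z : R) : (0 < N)%N -> N.-primitive_root z -> z != 0.
Proof.
move=> N0 Hz; apply: contraTneq isT => E.
have := prim_expr_order Hz; rewrite E expr0n; case: N N0 {Hz} => // N' _ /eqP.
by rewrite eq_sym oner_eq0.
Qed.

Lemma prim_half (R : idomainType) N (z : R) M :
  N.-primitive_root z -> N = (2 * M)%N -> (0 < M)%N -> z ^+ M = -1.
Proof.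
move=> Hz HN M0; have := sqrf_eq1 (z ^+ M).
rewrite -exprM mulnC -HN prim_expr_order // eqxx => /esym; case/orP => /eqP // E.
have := prim_order_dvd Hz M; rewrite E eqxx => /dvdn_leq => /(_ M0).
by rewrite HN; lia.
Qed.

Lemma valid_char (K : fieldType) N D E F (z : K) a b :
  N.-primitive_root z -> N = (D * E)%N -> (0 < N)%N ->
  valid (z ^+ D) (z ^+ F) a b <-> (a == b %[mod E]) && (N %| F * (a + b) * 2)%N.
Proof.
move=> Hz HN N0.
have E0 : (0 < E)%N by move: N0; rewrite HN; case: (E) => //; rewrite muln0.
have zD : E.-primitive_root (z ^+ D).
  have := dvdn_prim_root Hz (_ : E %| N)%N; rewrite {2}HN mulnK //.
  by apply; rewrite HN dvdn_mull.
have xnz : z ^+ D != 0 by rewrite expf_neq0 // (prim_nz N0 Hz).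
rewrite /valid -(eq_prim_root_expr zD) (prim_order_dvd Hz).
have -> : ((z ^+ F) ^+ a * (z ^+ F) ^+ b) ^+ 2 = z ^+ (F * (a + b) * 2).
  by rewrite -!exprM -exprD -exprM mulnDr.
set x := z ^+ D.
have xbn : x ^+ b != 0 by rewrite expf_neq0.
rewrite exprVn; split.
  case=> [H1 /eqP ->]; rewrite andbT; apply/eqP.
  by rewrite -[x ^+ a](mulfVK xbn) H1 mul1r.
case/andP => /eqP -> /eqP ->; split=> //; by rewrite mulfV.
Qed.

Lemma L1 n k a b : (0 < n)%N -> (2 * n * k %| n * (a + b) * 2)%N = (k %| a + b)%N.
Proof.
move=> n0; rewrite (_ : (n * (a + b) * 2 = (2 * n) * (a + b))%N).
  by rewrite dvdn_pmul2l // muln_gt0.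
by rewrite mulnC mulnA.
Qed.

Lemma L2 q r a b : (0 < q)%N -> (4 * q * r %| q * (a + b) * 2)%N = (2 * r %| a + b)%N.
Proof.
move=> q0; rewrite (_ : (4 * q * r = (2 * q) * (2 * r))%N); last by lia.
rewrite (_ : (q * (a + b) * 2 = (2 * q) * (a + b))%N); last by lia.
by rewrite dvdn_pmul2l // muln_gt0.
Qed.

Lemma par2 a b : (2 %| a + b)%N = (odd a == odd b).
Proof. by rewrite dvdn2 oddD; case: (odd a); case: (odd b). Qed.

Lemma mod2 a b : (a == b %[mod 2])%N = (odd a == odd b).
Proof. by rewrite !modn2; case: (odd a); case: (odd b). Qed.

Lemma alg_case (K : fieldType) (j : K) (hj : j ^+ 2 = -1) n k (w e : K) :
  inS (n, k) -> (2 * n * k)%N.-primitive_root w ->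
  (4 * (theta (n, k)).2 * ((theta (n, k)).1 - (theta (n, k)).2))%N.-primitive_root e ->
  skew_comm_alg_iso (fun p => condG (-1) (w ^+ (2 * k)) (w ^+ n) p)
    (fun p => condG 1 (e ^+ (2 * ((theta (n, k)).1 - (theta (n, k)).2))) (e ^+ (theta (n, k)).2) p).
Proof.
case/and5P => k0 cop n3 onk k4 Hw.
have n0 : (0 < n)%N by lia.
have N0 : (0 < 2 * n * k)%N by rewrite !muln_gt0 n0 k0.
have wnz : w != 0 by apply: (prim_nz N0 Hw).
have VS a b : valid (w ^+ (2 * k)) (w ^+ n) a b <-> (a == b %[mod n]) && (k %| a + b)%N.
  by rewrite -(@L1 n k a b n0); apply: valid_char Hw _ N0; lia.
have wnk : w ^+ (n * k) = -1 by apply: (prim_half Hw); rewrite ?mulnA // muln_gt0 n0.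
rewrite /theta; case Hn: (odd n) => /=.
-
  have ok : ~~ odd k by move: onk; rewrite oddD Hn.
  set r := (k %/ 2)%N.
  have kr : k = (2 * r)%N by rewrite /r mulnC divnK // dvdn2.
  have k4' : (4 %| k)%N by move: k4; rewrite kr; lia.
  rewrite addKn => He.
  have N1 : (0 < 4 * n * r)%N by rewrite !muln_gt0 n0; lia.
  have enz : e != 0 by apply: (prim_nz N1 He).
  have VC a b : valid (e ^+ (2 * r)) (e ^+ n) a b <-> (a == b %[mod n * 2]) && (k %| a + b)%N.
    by rewrite kr -(@L2 n r a b n0); apply: valid_char He _ N1; lia.
  have cop2 : coprime n 2 by rewrite coprime_sym prime_coprime // dvdn2 Hn.
  have enk : e ^+ (n * k) = -1 by apply: (prim_half He); [lia | rewrite muln_gt0 n0].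
  apply: (iso_main hj) => //; rewrite ?expf_neq0 // => a b.
  + move/VS => /andP [H1 H2]; apply/VC; rewrite H2 andbT chinese_remainder // H1 /=.
    by rewrite mod2 -par2; apply: dvdn_trans H2; rewrite kr dvdn_mulr.
  + move/VC => /andP [H1 H2]; apply/VS; rewrite H2 andbT.
    by move: H1; rewrite chinese_remainder // => /andP [].
  + move/VS => /andP [H1 H2]; apply/eqP; rewrite -par2.
    by apply: dvdn_trans H2; rewrite kr dvdn_mulr.
  + move/VS => /andP [_ /dvdnP [t ->]].
    rewrite mulnC !exprM exprMn (_ : j ^+ k = 1); last first.
      by case/dvdnP: k4' => s ->; rewrite mulnC exprM (_ : 4 = 2 * 2)%N // exprM hj sqrrN !expr1n.
    by rewrite mul1r -!exprM mulnA exprM enk [w ^+ _]exprM wnk.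
-
  have ok : odd k by move: onk; rewrite oddD Hn.
  set q := (n %/ 2)%N.
  have nq : n = (q * 2)%N by rewrite /q divnK // dvdn2 Hn.
  rewrite (_ : (q + k - q = k)%N); last by lia.
  move=> He.
  have N1 : (0 < 4 * q * k)%N by rewrite !muln_gt0 k0; lia.
  have enz : e != 0 by apply: (prim_nz N1 He).
  have VC a b : valid (e ^+ (2 * k)) (e ^+ q) a b <-> (a == b %[mod n]) && (2 * k %| a + b)%N.
    rewrite -(@L2 q k a b); last by lia.
    by apply: valid_char He _ N1; lia.
  have cop2 : coprime 2 k by rewrite prime_coprime // dvdn2 ok.
  have e2qk : e ^+ (2 * q * k) = -1 by apply: (prim_half He); [lia | rewrite !muln_gt0 k0; lia].
  have modpar a b : (a == b %[mod n])%N -> odd a = odd b.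
    move=> H; apply/eqP; rewrite -mod2.
    have d2 : (2 %| n)%N by rewrite nq dvdn_mull.
    by rewrite -(modn_dvdm a d2) -(modn_dvdm b d2) (eqP H).
  apply: (iso_main hj) => //; rewrite ?expf_neq0 // => a b.
  + move/VS => /andP [H1 H2]; apply/VC; rewrite H1 Gauss_dvd // H2 andbT /=.
    by rewrite par2 (modpar _ _ H1).
  + move/VC => /andP [H1 H2]; apply/VS; rewrite H1 /=.
    by apply: dvdn_trans H2; rewrite dvdn_mull.
  + by move/VS => /andP [H1 _]; apply: modpar.
  + move/VS => /andP [H1 H2].
    have : (2 * k %| a + b)%N by rewrite Gauss_dvd // H2 andbT par2 (modpar _ _ H1).
    case/dvdnP => t ->.
    have X1 : (j * e ^+ q) ^+ (2 * k) = 1.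
      rewrite exprMn exprM hj -signr_odd ok expr1 -exprM.
      by rewrite (_ : (q * (2 * k) = 2 * q * k)%N) ?e2qk ?mulrNN ?mulr1 //; lia.
    have X2 : (w ^+ n) ^+ (2 * k) = 1.
      by rewrite -exprM (_ : (n * (2 * k) = 2 * n * k)%N) ?prim_expr_order //; lia.
    by rewrite mulnC exprM X1 [RHS]exprM X2.
Qed.


Lemma iso_ext (K : fieldType) (A A' B B' : bipoly K -> Prop) :
  (forall p, A p <-> A' p) -> (forall p, B p <-> B' p) ->
  skew_comm_alg_iso A B -> skew_comm_alg_iso A' B'.
Proof.
move=> HA HB [f [H1 H2 H3 [H4 H5 H6 H7]]]; exists f; split.
- by move=> p /HA /H1 /HB.
- by move=> p q /HA Ap /HA Aq; apply: H2.
- by move=> r /HB /H3 [p /HA Ap fp]; exists p.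
split.
- by move=> p q /HA Ap /HA Aq; apply: H4.
- by move=> p q /HA Ap /HA Aq; apply: H5.
- exact: H6.
- by move=> c p /HA Ap; apply: H7.
Qed.

Lemma sqrt_m1 (K : closedFieldType) : exists j : K, j ^+ 2 = -1.
Proof.
have [x Hx] := @solve_monicpoly K 2 (fun i => if i == 0%N then -1 else 0) isT.
exists x; rewrite Hx big_ord_recr big_ord_recr big_ord0 /=.
by rewrite add0r expr0 mulr1 mul0r addr0.
Qed.


Lemma cop_sub m q : (q <= m)%N -> coprime q (m - q) = coprime m q.
Proof. by move=> H; rewrite /coprime -gcdnDl subnKC // gcdnC. Qed.

Lemma cop_add a b : coprime (a + b) a = coprime a b.
Proof. by rewrite coprime_sym /coprime gcdnDl. Qed.

Lemma odd_q m q : (q < m)%N -> coprime m q -> ~~ odd (m - q) -> odd q.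
Proof.
move=> qm cop Hd; apply: contraLR cop => eq; rewrite /coprime; apply/negP => /eqP g1.
have : (2 %| gcdn m q)%N.
  rewrite dvdn_gcd !dvdn2 eq andbT.
  by move: Hd; rewrite oddB ?(ltnW qm) // (negbTE eq) addbF.
by rewrite g1.
Qed.

Lemma comb1 x : inS x -> inT (theta x).
Proof.
case: x => n k; case/and5P => k0 cop n3 onk k4; rewrite /theta.
case Hn: (odd n) => /=.
- have : ~~ odd k by move: onk; rewrite oddD Hn.
  rewrite -dvdn2 => /dvdnP [r kr]; rewrite kr mulnK //.
  have r0 : (0 < r)%N by move: k0; rewrite kr; lia.
  apply/and3P; split; try lia.
  rewrite cop_add; by move: cop; rewrite kr coprimeMr => /andP [].
- have nq : n = (n %/ 2 * 2)%N by rewrite divnK // dvdn2 Hn.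
  apply/and3P; split; try lia.
  rewrite cop_add; move: cop; rewrite {1}nq coprimeMl; by case/andP.
Qed.

Lemma comb2 x : inS x -> theta_inv (theta x) = x.
Proof.
case: x => n k; case/and5P => k0 cop n3 onk k4; rewrite /theta /theta_inv.
case Hn: (odd n) => /=.
- have : ~~ odd k by move: onk; rewrite oddD Hn.
  rewrite -dvdn2 => /dvdnP [r kr]; rewrite kr mulnK // addKn.
  have er : ~~ odd r by move: k4; rewrite kr; lia.
  by rewrite er /=; congr pair; rewrite mulnC.
- have ok : odd k by move: onk; rewrite oddD Hn.
  rewrite addKn ok /=; congr pair.
  by rewrite mulnC divnK // dvdn2 Hn.
Qed.

Lemma comb3 y : inT y -> inS (theta_inv y).
Proof.
case: y => m q; case/and3P => q1 qm cop; rewrite /theta_inv.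
case Hd: (odd (m - q)) => /=; apply/and5P; split.
- lia.
- by rewrite coprimeMl coprime2n Hd /= cop_sub ?(ltnW qm).
- lia.
- by rewrite oddD oddM /= Hd.
- by move: Hd; lia.
- lia.
- have oq := odd_q qm cop (negbT Hd).
  by rewrite coprimeMr coprime_sym coprime2n oq /= cop_sub ?(ltnW qm).
- have oq := odd_q qm cop (negbT Hd); move: oq q1; lia.
- by rewrite oddD oddM /= addbF (odd_q qm cop (negbT Hd)).
- by move: Hd; lia.
Qed.

Lemma comb4 y : inT y -> theta (theta_inv y) = y.
Proof.
case: y => m q; case/and3P => q1 qm cop; rewrite /theta /theta_inv.
case Hd: (odd (m - q)) => /=.
- by rewrite oddM /= !mulKn // subnKC // ltnW.
- have oq := odd_q qm cop (negbT Hd).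
  by rewrite oq /= mulKn // subnKC // ltnW.
Qed.

Theorem mainTheorem17 :
  [/\ forall x, inS x -> inT (theta x),
      forall x, inS x -> theta_inv (theta x) = x,
      forall y, inT y -> inS (theta_inv y),
      forall y, inT y -> theta (theta_inv y) = y &
      forall (K : closedFieldType), [pchar K] =i pred0 ->
      forall (n k : nat) (w e : K), inS (n, k) ->
        (2 * n * k)%N.-primitive_root w ->
        (4 * (theta (n, k)).2 * ((theta (n, k)).1 - (theta (n, k)).2))%N.-primitive_root e ->
        skew_comm_alg_iso (skew_inv (G_nk n k w))
                          (comm_inv (D_mq (theta (n, k)).1 (theta (n, k)).2 e))].
Proof.
split; [exact: comb1 | exact: comb2 | exact: comb3 | exact: comb4 |].
move=> K _ n k w e HS Hw He.
have [j hj] := sqrt_m1 K.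
have N0 : (0 < 2 * n * k)%N.
  by move: HS; case/and5P => k0 _ n3 _ _; rewrite !muln_gt0 k0; lia.
have N1 : (0 < 4 * (theta (n, k)).2 * ((theta (n, k)).1 - (theta (n, k)).2))%N.
  move: (comb1 HS); rewrite /inT; case: (theta (n, k)) => m q /= /and3P [q1 qm _].
  by rewrite !muln_gt0 subn_gt0 qm; lia.
have wnz := prim_nz N0 Hw; have enz := prim_nz N1 He.
apply: (iso_ext _ _ (alg_case hj HS Hw He)) => p; apply: iff_sym.
- exact: (inv_iff (@skmul_mono K) (@sNN K) (expf_neq0 _ wnz) (expf_neq0 _ wnz) p).
- exact: (inv_iff (@mul_mono K) (@s11 K) (expf_neq0 _ enz) (expf_neq0 _ enz) p).
Qed.
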